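(* Let $0<\alpha\le\delta<\infty$, $0<\gamma<\tfrac13$, and let $H_{\gamma/\delta}$ be the Banach space of real sequences $x=(x_k)_{k\ge0}$ with $\|x\|=\sum_{k\ge0}(\gamma/\delta)^k|x_k|<\infty$. Let $\mathcal R^a_1(a)_k=\frac{1}{k+1}\sum_{n=0}^ka_na_{k-n}$. If $a_0\in X_{\alpha,\delta}$ and $a(t)$ denotes the solution of the initial value problem $\frac{d}{dt}a(t)=\mathcal R^a_1(a(t))-a(t)$, $a(0)=a_0$, in $H_{\gamma/\delta}$, then $a(t)\in X_{\alpha,\delta}$ for all $t\ge0$ and $\lim_{t\to\infty}\|a(t)-\bar\alpha\|=0$, where $\bar\alpha=(1,\alpha,\alpha^2,\alpha^3,\dots)$.
   Context: $X_{\alpha,\delta}$ is the set of real sequences $a=(a_k)_{k\ge0}$ with $a_0=1$, $a_1=\alpha$, $0\le a_k\le\delta^k$ for $k\ge2$; it is a subset of $H_{\gamma/\delta}$, and the metric on it is $d(a,b)=\|a-b\|$. *)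

(* Defs.v *)
From Stdlib Require Import Reals Lra.
From Coquelicot Require Import Coquelicot.
Open Scope R_scope.

Definition seqR := nat -> R.

Definition inH (w : R) (x : seqR) : Prop :=
  ex_series (fun k => w ^ k * Rabs (x k)).

Definition normH (w : R) (x : seqR) : R :=
  Series (fun k => w ^ k * Rabs (x k)).

Definition seq_sub (x y : seqR) : seqR := fun k => x k - y k.
Definition seq_scal (c : R) (x : seqR) : seqR := fun k => c * x k.

Definition Ra1 (a : seqR) : seqR :=
  fun k => / INR (S k) * sum_f_R0 (fun n => a n * a (k - n)%nat) k.

Definition ode_field (a : seqR) : seqR := seq_sub (Ra1 a) a.

Definition X_set (alpha delta : R) (a : seqR) : Prop :=
  a 0%nat = 1 /\ a 1%nat = alpha /\
  forall k : nat, (2 <= k)%nat -> 0 <= a k <= delta ^ k.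

Definition alpha_bar (alpha : R) : seqR := fun k => alpha ^ k.

Definition is_H_solution (w : R) (F : seqR -> seqR) (u0 : seqR) (u : R -> seqR) : Prop :=
  u 0 = u0 /\
  (forall t, 0 <= t -> inH w (u t)) /\
  (forall t, 0 <= t ->
     forall eps, 0 < eps -> exists d, 0 < d /\
       forall h, h <> 0 -> Rabs h < d -> 0 <= t + h ->
         let q := seq_sub (seq_scal (/ h) (seq_sub (u (t + h)) (u t))) (F (u t)) in
         inH w q /\ normH w q < eps).

(* Main.v *)
Require Import Defs.
From Stdlib Require Import Reals Lra Lia.
From Coquelicot Require Import Coquelicot.
Open Scope R_scope.

Lemma term_le_series (u : nat -> R) (k : nat) :
  (forall n, 0 <= u n) -> ex_series u -> u k <= Series u.
Proof.
  intros Hu Hex.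
  rewrite (Series_incr_n u (S k)) by (lia || exact Hex).
  simpl Init.Nat.pred.
  assert (H1 : u k <= sum_f_R0 u k).
  { destruct k; simpl; [lra|]. assert (0 <= sum_f_R0 u k).
    { apply cond_pos_sum. exact Hu. } lra. }
  assert (H2 : 0 <= Series (fun j => u (S k + j)%nat)).
  { assert (Z := Series_scal_l 0 (fun j => u (S k + j)%nat)). rewrite Rmult_0_l in Z.
    rewrite <- Z. apply Series_le. intros; split; [lra| rewrite Rmult_0_l; apply Hu].
    apply (ex_series_incr_n u (S k)). exact Hex. }
  lra.
Qed.

Lemma mono (f df : R -> R) (s t : R) :
  s <= t ->
  (forall x, s < x < t -> is_derive f x (df x)) ->
  (forall x, s <= x <= t -> continuity_pt f x) ->
  (forall x, s <= x <= t -> df x <= 0) -> f t <= f s.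
Proof.
  intros Hst Hd Hc Hs.
  destruct (MVT_gen f s t df) as [c [Hc1 Hc2]].
  - rewrite Rmin_left, Rmax_right by lra. exact Hd.
  - rewrite Rmin_left, Rmax_right by lra. exact Hc.
  - rewrite Rmin_left, Rmax_right in Hc1 by lra.
    assert (df c <= 0) by (apply Hs; lra). nra.
Qed.

Lemma mono_comp (f D P dP : R -> R) (c s t : R) :
  0 <= s <= t ->
  (forall x, 0 <= x -> continuity_pt f x) ->
  (forall x, 0 < x -> is_derive f x (D x)) ->
  (forall y, is_derive P y (dP y)) ->
  (forall x, s <= x <= t -> dP (f x) * D x + c * P (f x) <= 0) ->
  P (f t) * exp (c * t) <= P (f s) * exp (c * s).
Proof.
  intros Hst Hc Hd HP Hs.
  apply (mono (fun x => P (f x) * exp (c * x))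
              (fun x => (dP (f x) * D x + c * P (f x)) * exp (c * x))); [lra| | |].
  - intros x Hx.
    assert (H1 : is_derive (fun x => P (f x)) x (D x * dP (f x))).
    { apply (is_derive_comp P f x (dP (f x)) (D x)); [apply HP | apply Hd; lra]. }
    assert (H2 : is_derive (fun x => exp (c * x)) x (c * exp (c * x))).
    { auto_derive; auto; ring. }
    assert (H3 := is_derive_mult _ _ x _ _ H1 H2 Rmult_comm).
    assert (E : (dP (f x) * D x + c * P (f x)) * exp (c * x) = plus (mult (D x * dP (f x)) (exp (c*x))) (mult (P (f x)) (c * exp (c*x)))).
    { unfold plus, mult; simpl. ring. }
    rewrite E. exact H3.
  - intros x Hx. apply continuity_pt_filterlim.
    apply (continuous_mult (fun x => P (f x)) (fun x => exp (c * x))).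
    + apply continuous_comp. apply continuity_pt_filterlim, Hc; lra.
      apply (@ex_derive_continuous R_AbsRing R_NormedModule P). eexists; apply HP.
    + apply continuous_exp_comp. apply (@ex_derive_continuous R_AbsRing R_NormedModule (fun x => c * x)). auto_derive; auto.
  - intros x Hx. assert (0 < exp (c*x)) by apply exp_pos.
    assert (Hh := Hs x Hx). nra.
Qed.

Section Sol.
Variables (alpha delta gamma : R) (a0 : seqR) (a : R -> seqR).
Hypotheses (Hal : 0 < alpha) (Had : alpha <= delta) (Hg : 0 < gamma)
  (Hg3 : gamma < 1 / 3) (HX0 : X_set alpha delta a0)
  (Hsol : is_H_solution (gamma / delta) ode_field a0 a).

Lemma Hdel : 0 < delta. Proof. lra. Qed.
Lemma Hw : 0 < gamma / delta.
Proof. apply Rdiv_lt_0_compat; [exact Hg | apply Hdel]. Qed.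

Lemma coord_bound t k eps : 0 <= t -> 0 < eps -> exists d, 0 < d /\
  forall h, h <> 0 -> Rabs h < d -> 0 <= t + h ->
  Rabs ((a (t + h) k - a t k) / h - ode_field (a t) k) < eps.
Proof.
  intros Ht He.
  destruct Hsol as [_ [_ H3]].
  assert (Hwk : 0 < (gamma/delta)^k) by (apply pow_lt, Hw).
  destruct (H3 t Ht (eps * (gamma/delta)^k)) as [d [Hd Hh]].
  { apply Rmult_lt_0_compat; assumption. }
  exists d; split; [exact Hd|].
  intros h Hh0 Hhd Hth.
  destruct (Hh h Hh0 Hhd Hth) as [Hin Hn]. cbv zeta in Hin, Hn.
  set (q := seq_sub (seq_scal (/ h) (seq_sub (a (t + h)) (a t))) (ode_field (a t))) in *.
  assert (Hle := term_le_series (fun k => (gamma/delta)^k * Rabs (q k)) k).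
  assert (Hq : q k = (a (t + h) k - a t k) / h - ode_field (a t) k).
  { unfold q, seq_sub, seq_scal, Rdiv. ring. }
  rewrite <- Hq.
  assert ((gamma/delta)^k * Rabs (q k) < eps * (gamma/delta)^k).
  { eapply Rle_lt_trans; [apply Hle|].
    - intros n. apply Rmult_le_pos; [apply pow_le; left; apply Hw | apply Rabs_pos].
    - exact Hin.
    - exact Hn. }
  nra.
Qed.

Definition X k t := a (Rmax 0 t) k.

Lemma X_pos k t : 0 <= t -> X k t = a t k.
Proof. intros; unfold X; rewrite Rmax_right; auto. Qed.

Lemma X_deriv k t : 0 < t -> is_derive (X k) t (ode_field (a t) k).
Proof.
  intros Ht. apply is_derive_Reals. intros eps He.
  destruct (coord_bound t k eps) as [d [Hd Hh]]; try lra.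
  assert (Hm : 0 < Rmin d t) by (apply Rmin_pos; lra).
  exists (mkposreal _ Hm). intros h Hh0 Hhd. simpl in Hhd.
  assert (Hd1 : Rabs h < d) by (eapply Rlt_le_trans; [exact Hhd | apply Rmin_l]).
  assert (Hd2 : Rabs h < t) by (eapply Rlt_le_trans; [exact Hhd | apply Rmin_r]).
  assert (0 < t + h) by (apply Rabs_def2 in Hd2; lra).
  rewrite !X_pos by lra. apply Hh; auto; lra.
Qed.

Lemma X_cont k t : 0 <= t -> continuity_pt (X k) t.
Proof.
  intros Ht eps He.
  destruct (coord_bound t k 1) as [d [Hd Hh]]; try lra.
  set (M := Rabs (ode_field (a t) k) + 1).
  assert (HM : 0 < M) by (unfold M; assert (Hr := Rabs_pos (ode_field (a t) k)); lra).
  assert (Hlip : forall h, Rabs h < d -> 0 <= t + h -> Rabs (a (t + h) k - a t k) <= M * Rabs h).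
  { intros h Hhd Hth. destruct (Req_dec h 0) as [->|Hh0].
    - rewrite Rplus_0_r, Rminus_diag, Rabs_R0. lra.
    - specialize (Hh h Hh0 Hhd Hth).
      assert (E : a (t + h) k - a t k = ((a (t + h) k - a t k) / h - ode_field (a t) k) * h + ode_field (a t) k * h)
        by (field; auto).
      rewrite E. eapply Rle_trans; [apply Rabs_triang|]. rewrite !Rabs_mult.
      unfold M. assert (Hr := Rabs_pos h). nra. }
  exists (Rmin d (eps / M)). split.
  { apply Rmin_pos; [lra | apply Rdiv_lt_0_compat; lra]. }
  intros x [_ Hx]. simpl in *. unfold R_dist in *.
  assert (Hx1 : Rabs (x - t) < d) by (eapply Rlt_le_trans; [exact Hx | apply Rmin_l]).
  assert (Hx2 : Rabs (x - t) < eps / M) by (eapply Rlt_le_trans; [exact Hx | apply Rmin_r]).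
  assert (HMe : M * Rabs (x - t) < eps).
  { apply (Rmult_lt_compat_l M) in Hx2; [|lra]. replace (M * (eps / M)) with eps in Hx2 by (field; lra). lra. }
  rewrite (X_pos k t Ht).
  destruct (Rle_dec 0 x) as [Hx0|Hx0].
  - rewrite (X_pos k x Hx0).
    assert (Hl := Hlip (x - t) Hx1 ltac:(lra)). replace (t + (x - t)) with x in Hl by ring. lra.
  - apply Rnot_le_lt in Hx0. unfold X. rewrite Rmax_left by lra.
    destruct (Req_dec t 0) as [->|Ht0].
    + rewrite Rminus_diag, Rabs_R0. lra.
    + 
      assert (Ha : Rabs (-t) < d).
      { rewrite Rabs_Ropp, Rabs_right by lra. rewrite Rabs_left in Hx1 by lra. lra. }
      assert (L := Hlip (-t) Ha ltac:(lra)). replace (t + - t) with 0 in L by ring.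
      rewrite Rabs_Ropp, (Rabs_right t) in L by lra.
      rewrite Rabs_left in HMe by lra. nra.
Qed.


Lemma a_init : a 0 = a0.
Proof. destruct Hsol as [H _]. exact H. Qed.

Lemma ode0 (b : seqR) : ode_field b 0%nat = b 0%nat * b 0%nat - b 0%nat.
Proof. unfold ode_field, seq_sub, Ra1. simpl. field. Qed.

Lemma ode1 (b : seqR) : b 0%nat = 1 -> ode_field b 1%nat = 0.
Proof. intros H. unfold ode_field, seq_sub, Ra1. simpl. rewrite H. field. Qed.

Lemma a_zero t : 0 <= t -> a t 0%nat = 1.
Proof.
  intros Ht.
  destruct (continuity_ab_maj (X 0%nat) 0 t Ht) as [Mx [HM HMx]].
  { intros c Hc. apply X_cont; lra. }
  set (M := X 0%nat Mx) in *.
  assert (HX00 : X 0%nat 0 = 1).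
  { rewrite X_pos by lra. rewrite a_init. destruct HX0 as [H _]. exact H. }
  assert (HM1 : 1 <= M) by (rewrite <- HX00; apply HM; lra).
  assert (L := mono_comp (X 0%nat) (fun x => ode_field (a (Rmax 0 x)) 0%nat)
     (fun y => (y - 1)^2) (fun y => 2 * (y - 1)) (-2 * M) 0 t).
  simpl in L. rewrite HX00 in L.
  assert (Hf : (X 0%nat t - 1) * ((X 0%nat t - 1) * 1) * exp (-2 * M * t) <= 0).
  { eapply Rle_trans; [apply L|].
    - lra.
    - intros x Hx. apply X_cont; lra.
    - intros x Hx. rewrite Rmax_right by lra. apply X_deriv; lra.
    - intros y. auto_derive; auto; ring.
    - intros x Hx. rewrite ode0. change (a (Rmax 0 x) 0%nat) with (X 0%nat x).
      assert (HMx' := HM x Hx). fold M in HMx'.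
      assert (0 <= (X 0%nat x - 1)^2) by (apply pow2_ge_0). nra.
    - lra. }
  assert (0 < exp (-2 * M * t)) by apply exp_pos.
  assert (H2 : (X 0%nat t - 1) * (X 0%nat t - 1) * exp (-2 * M * t) <= 0 * exp (-2 * M * t)).
  { rewrite Rmult_0_l. replace ((X 0%nat t - 1) * (X 0%nat t - 1)) with ((X 0%nat t - 1) * ((X 0%nat t - 1) * 1)) by ring. exact Hf. }
  apply Rmult_le_reg_r in H2; [|assumption].
  assert (X 0%nat t = 1) by nra.
  rewrite <- X_pos by lra. assumption.
Qed.

Lemma a_one t : 0 <= t -> a t 1%nat = alpha.
Proof.
  intros Ht.
  assert (HX10 : X 1%nat 0 = alpha).
  { rewrite X_pos by lra. rewrite a_init. destruct HX0 as [_ [H _]]. exact H. }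
  assert (Hd : forall x, 0 < x -> is_derive (X 1%nat) x ((fun x => ode_field (a (Rmax 0 x)) 1%nat) x)).
  { intros x Hx. rewrite Rmax_right by lra. apply X_deriv; lra. }
  assert (Hz : forall x, 0 <= x -> ode_field (a (Rmax 0 x)) 1%nat = 0).
  { intros x Hx. apply ode1. apply a_zero. apply Rmax_l. }
  assert (L1 := mono_comp (X 1%nat) (fun x => ode_field (a (Rmax 0 x)) 1%nat)
     (fun y => y - alpha) (fun y => 1) 0 0 t).
  assert (L2 := mono_comp (X 1%nat) (fun x => ode_field (a (Rmax 0 x)) 1%nat)
     (fun y => alpha - y) (fun y => -1) 0 0 t).
  simpl in L1, L2. rewrite HX10, !Rmult_0_l, exp_0 in L1, L2.
  assert (X 1%nat t - alpha <= 0).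
  { rewrite <- (Rmult_1_r (X 1%nat t - alpha)). replace 0 with ((alpha - alpha) * 1) by ring.
    apply L1; [lra| | | | ].
    - intros x Hx. apply X_cont; lra.
    - exact Hd.
    - intros y. auto_derive; auto; ring.
    - intros x Hx. rewrite Hz by lra. lra. }
  assert (alpha - X 1%nat t <= 0).
  { rewrite <- (Rmult_1_r (alpha - X 1%nat t)). replace 0 with ((alpha - alpha) * 1) by ring.
    apply L2; [lra| | | | ].
    - intros x Hx. apply X_cont; lra.
    - exact Hd.
    - intros y. auto_derive; auto; ring.
    - intros x Hx. rewrite Hz by lra. lra. }
  rewrite <- X_pos by lra. lra.
Qed.

Definition Ssum (b : seqR) (m : nat) : R :=
  sum_f_R0 (fun i => b (S i) * b (S m - i)%nat) m.

Lemma ode_decomp (b : seqR) (m : nat) : b 0%nat = 1 ->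
  ode_field b (S (S m)) =
  - (INR (S m) / INR (S (S (S m)))) * b (S (S m)) + Ssum b m / INR (S (S (S m))).
Proof.
  intros H0. unfold ode_field, seq_sub, Ra1.
  rewrite tech5. rewrite decomp_sum by lia. simpl Init.Nat.pred.
  rewrite Nat.sub_diag, Nat.sub_0_r, H0.
  unfold Ssum.
  assert (E : sum_f_R0 (fun i : nat => b (S i) * b (S (S m) - S i)%nat) m
            = sum_f_R0 (fun i : nat => b (S i) * b (S m - i)%nat) m) by reflexivity.
  rewrite E.
  assert (HI : INR (S (S (S m))) = INR (S m) + 2) by (rewrite !S_INR; ring).
  rewrite HI. assert (0 <= INR (S m)) by apply pos_INR.
  field. lra.
Qed.

Lemma Ssum_bounds (b : seqR) (m : nat) (D : R) : 0 <= D ->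
  (forall j, (1 <= j <= S m)%nat -> 0 <= b j <= D ^ j) ->
  0 <= Ssum b m <= INR (S m) * D ^ (S (S m)).
Proof.
  intros HD Hb. unfold Ssum.
  assert (Ht : forall i, (i <= m)%nat -> 0 <= b (S i) * b (S m - i)%nat <= D ^ (S (S m))).
  { intros i Hi.
    destruct (Hb (S i)) as [H1 H2]; [lia|].
    destruct (Hb (S m - i)%nat) as [H3 H4]; [lia|].
    replace (S (S m)) with (S i + (S m - i))%nat by lia. rewrite pow_add.
    split; [apply Rmult_le_pos; auto|]. apply Rmult_le_compat; auto. }
  assert (G : forall n, (n <= m)%nat ->
    0 <= sum_f_R0 (fun i => b (S i) * b (S m - i)%nat) n <= INR (S n) * D ^ (S (S m))).
  { induction n as [|n IH]; intros Hn.
    - unfold sum_f_R0. cbv beta. change (INR 1) with 1. specialize (Ht 0%nat ltac:(lia)). lra.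
    - rewrite tech5. specialize (IH ltac:(lia)). specialize (Ht (S n) Hn).
      rewrite (S_INR (S n)). lra. }
  apply G. lia.
Qed.

Lemma Ssum_lim (f : R -> seqR) (m : nat) (L : R) :
  (forall j, (1 <= j <= S m)%nat -> is_lim (fun t => f t j) p_infty (L ^ j)) ->
  is_lim (fun t => Ssum (f t) m) p_infty (INR (S m) * L ^ (S (S m))).
Proof.
  intros Hf. unfold Ssum.
  assert (Ht : forall i, (i <= m)%nat ->
     is_lim (fun t => f t (S i) * f t (S m - i)%nat) p_infty (L ^ (S (S m)))).
  { intros i Hi.
    replace (S (S m)) with (S i + (S m - i))%nat by lia. rewrite pow_add.
    apply (is_lim_mult _ _ p_infty (L ^ S i) (L ^ (S m - i))).
    - apply Hf. lia.
    - apply Hf. lia.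
    - simpl. exact I. }
  assert (G : forall n, (n <= m)%nat ->
    is_lim (fun t => sum_f_R0 (fun i => f t (S i) * f t (S m - i)%nat) n) p_infty
       (INR (S n) * L ^ (S (S m)))).
  { induction n as [|n IH]; intros Hn.
    - simpl. rewrite Rmult_1_l. apply (Ht 0%nat). lia.
    - eapply is_lim_ext.
      { intros y. symmetry. apply tech5. }
      rewrite (S_INR (S n)), Rmult_plus_distr_r, Rmult_1_l.
      apply is_lim_plus'; [apply IH; lia | apply Ht; lia]. }
  apply G. lia.
Qed.

Lemma cmp (f g : R -> R) (c B s t : R) : 0 <= s <= t ->
  (forall x, 0 <= x -> continuity_pt f x) ->
  (forall x, 0 < x -> is_derive f x (- c * f x + g x)) ->
  (forall x, s <= x <= t -> g x <= c * B) ->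
  (f t - B) * exp (c * t) <= (f s - B) * exp (c * s).
Proof.
  intros Hst Hc Hd Hg'.
  apply (mono_comp f (fun x => - c * f x + g x) (fun y => y - B) (fun _ => 1) c s t); auto.
  - intros y. auto_derive; auto; ring.
  - intros x Hx. specialize (Hg' x Hx). lra.
Qed.

Lemma cmp_neg (f g : R -> R) (c B s t : R) : 0 <= s <= t ->
  (forall x, 0 <= x -> continuity_pt f x) ->
  (forall x, 0 < x -> is_derive f x (- c * f x + g x)) ->
  (forall x, s <= x <= t -> c * B <= g x) ->
  (f s - B) * exp (c * s) <= (f t - B) * exp (c * t).
Proof.
  intros Hst Hc Hd Hg'.
  assert (L := cmp (fun x => - f x) (fun x => - g x) c (- B) s t Hst).
  cut ((- f t - - B) * exp (c * t) <= (- f s - - B) * exp (c * s)). { intros; lra. }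
  apply L.
  - intros x Hx. apply (continuity_pt_opp f x). auto.
  - intros x Hx. 
    assert (E : - c * - f x + - g x = opp (- c * f x + g x)) by (unfold opp; simpl; ring).
    rewrite E. apply (is_derive_opp f x). auto.
  - intros x Hx. specialize (Hg' x Hx). lra.
Qed.

Lemma decay (y K z E eps : R) : 0 < eps -> 0 <= K -> 0 < 1 + z -> 1 + z <= E ->
  y * E <= K -> 2 * K < eps * (1 + z) -> y < eps / 2.
Proof.
  intros He HK Hz HE Hy Hk.
  destruct (Rle_dec y 0) as [H|H]; [lra|].
  apply Rnot_le_lt in H.
  assert (y * (1 + z) <= y * E) by (apply Rmult_le_compat_l; lra).
  nra.
Qed.

Lemma bound_k (f g : R -> R) (c D : R) : 0 <= c ->
  (forall x, 0 <= x -> continuity_pt f x) ->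
  (forall x, 0 < x -> is_derive f x (- c * f x + g x)) ->
  (forall x, 0 <= x -> 0 <= g x <= c * D) ->
  0 <= f 0 <= D -> forall t, 0 <= t -> 0 <= f t <= D.
Proof.
  intros Hc Hcont Hd Hg' H0 t Ht.
  assert (U := cmp f g c D 0 t ltac:(lra) Hcont Hd).
  assert (V := cmp_neg f g c 0 0 t ltac:(lra) Hcont Hd).
  assert (E0 : exp (c * 0) = 1) by (rewrite Rmult_0_r; apply exp_0).
  rewrite E0, Rmult_1_r in U. rewrite E0, Rmult_1_r in V.
  assert (0 < exp (c * t)) by apply exp_pos.
  assert (f t - D <= 0).
  { assert (HU : (f t - D) * exp (c * t) <= 0).
    { eapply Rle_trans; [apply U|lra]. intros x Hx. apply Hg'; lra. }
    nra. }
  assert (0 <= f t).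
  { assert (HV : 0 <= (f t - 0) * exp (c * t)).
    { eapply Rle_trans; [|apply V]. lra. intros x Hx. rewrite Rmult_0_r. apply Hg'; lra. }
    nra. }
  lra.
Qed.

Lemma conv_k (f g : R -> R) (c L : R) : 0 < c ->
  (forall x, 0 <= x -> continuity_pt f x) ->
  (forall x, 0 < x -> is_derive f x (- c * f x + g x)) ->
  is_lim g p_infty (c * L) -> is_lim f p_infty L.
Proof.
  intros Hc Hcont Hd Hlim.
  apply is_lim_spec. intros eps. simpl.
  apply is_lim_spec in Hlim.
  assert (He2 : 0 < c * eps / 2) by (assert (Hp := cond_pos eps); apply Rdiv_lt_0_compat; nra).
  destruct (Hlim (mkposreal _ He2)) as [T HT]. simpl in HT.
  assert (Hep := cond_pos eps).
  set (T' := Rmax T 0 + 1).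
  assert (HT1 : T < T') by (unfold T'; assert (Hm := Rmax_l T 0); lra).
  assert (HT2 : 0 < T') by (unfold T'; assert (Hm := Rmax_r T 0); lra).
  set (B1 := L + eps / 2). set (B2 := L - eps / 2).
  set (K := Rabs (f T' - B1) + Rabs (f T' - B2)).
  assert (HK : 0 <= K) by (unfold K; assert (Hr1 := Rabs_pos (f T' - B1)); assert (Hr2 := Rabs_pos (f T' - B2)); lra).
  assert (HK1 : f T' - B1 <= K) by (unfold K; assert (Hr1 := Rabs_pos (f T' - B2)); assert (Hr2 := Rle_abs (f T' - B1)); lra).
  assert (HK2 : B2 - f T' <= K) by (unfold K; assert (Hr1 := Rabs_pos (f T' - B1)); assert (Hr2 := Rle_abs (- (f T' - B2))); rewrite Rabs_Ropp in Hr2; lra).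
  assert (Hq : 0 <= 2 * K / (c * eps)) by (apply Rmult_le_pos; [lra| left; apply Rinv_0_lt_compat; nra]).
  exists (T' + 2 * K / (c * eps)).
  intros t Ht.
  assert (Htt : T' < t) by lra.
  assert (U := cmp f g c B1 T' t ltac:(lra) Hcont Hd).
  assert (V := cmp_neg f g c B2 T' t ltac:(lra) Hcont Hd).
  assert (U' : (f t - B1) * exp (c * t) <= (f T' - B1) * exp (c * T')).
  { apply U. intros x Hx. assert (Hx' := HT x ltac:(lra)). apply Rabs_def2 in Hx'.
    unfold B1. lra. }
  assert (V' : (f T' - B2) * exp (c * T') <= (f t - B2) * exp (c * t)).
  { apply V. intros x Hx. assert (Hx' := HT x ltac:(lra)). apply Rabs_def2 in Hx'.
    unfold B2. lra. }
  clear U V.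
  replace (c * t) with (c * T' + c * (t - T')) in U', V' by ring.
  rewrite exp_plus in U', V'.
  set (E1 := exp (c * T')) in *. set (E := exp (c * (t - T'))) in *.
  assert (HE1 : 0 < E1) by apply exp_pos.
  assert (HE : 1 + c * (t - T') <= E) by apply exp_ineq1_le.
  assert (Hz : 0 < 1 + c * (t - T')) by nra.
  assert (Hk : 2 * K < eps * (1 + c * (t - T'))).
  { assert (2 * K / (c * eps) < t - T') by lra.
    assert (Hce : 0 < c * eps) by nra.
    apply (Rmult_lt_compat_l (c * eps)) in H; [|exact Hce].
    replace (c * eps * (2 * K / (c * eps))) with (2 * K) in H by (field; lra). nra. }
  assert (A1 : (f t - B1) * E <= K).
  { assert ((f t - B1) * E * E1 <= (f T' - B1) * E1) by (rewrite <- U'; right; ring).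
    apply Rmult_le_reg_r in H; lra. }
  assert (A2 : (B2 - f t) * E <= K).
  { assert ((B2 - f t) * E * E1 <= (B2 - f T') * E1).
    { replace ((B2 - f t) * E * E1) with (- ((f t - B2) * (E1 * E))) by ring.
      replace ((B2 - f T') * E1) with (- ((f T' - B2) * E1)) by ring. lra. }
    apply Rmult_le_reg_r in H; lra. }
  assert (D1 := decay _ _ _ _ _ Hep HK Hz HE A1 Hk).
  assert (D2 := decay _ _ _ _ _ Hep HK Hz HE A2 Hk).
  unfold B1, B2 in *. apply Rabs_def1; lra.
Qed.

Lemma bounds_all (n : nat) : forall j, (1 <= j <= S n)%nat -> forall t, 0 <= t ->
  0 <= a t j <= delta ^ j.
Proof.
  induction n as [|n IH]; intros j Hj t Ht.
  - replace j with 1%nat by lia. rewrite a_one by lra. simpl. lra.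
  - destruct (Nat.le_gt_cases j (S n)) as [Hle|Hgt]; [apply IH; [lia|lra]|].
    replace j with (S (S n)) by lia.
    rewrite <- X_pos by lra.
    assert (HN : 0 < INR (S (S (S n)))) by (apply lt_0_INR; lia).
    assert (HI : 0 < INR (S n)) by (apply lt_0_INR; lia).
    apply (bound_k (X (S (S n))) (fun x => Ssum (a (Rmax 0 x)) n / INR (S (S (S n))))
             (INR (S n) / INR (S (S (S n)))) (delta ^ (S (S n)))); [ | | | | | lra].
    + apply Rlt_le, Rdiv_lt_0_compat; lra.
    + intros x Hx. apply X_cont; lra.
    + intros x Hx. rewrite (X_pos _ x) by lra. rewrite Rmax_right by lra.
      rewrite <- ode_decomp by (apply a_zero; lra). apply X_deriv; lra.
    + intros x Hx.
      destruct (Ssum_bounds (a (Rmax 0 x)) n delta) as [S1 S2].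
      { apply Rlt_le, Hdel. }
      { intros i Hi. apply IH; [lia | apply Rmax_l]. }
      split.
      * apply Rmult_le_pos; [lra | left; apply Rinv_0_lt_compat; lra].
      * replace (INR (S n) / INR (S (S (S n))) * delta ^ S (S n))
          with (INR (S n) * delta ^ S (S n) / INR (S (S (S n)))) by (field; lra).
        apply Rmult_le_compat_r; [left; apply Rinv_0_lt_compat; lra | exact S2].
    + rewrite X_pos by lra. rewrite a_init. destruct HX0 as [_ [_ H]]. apply H. lia.
Qed.

Lemma lim_all (n : nat) : forall j, (j <= S n)%nat ->
  is_lim (fun t => a t j) p_infty (alpha ^ j).
Proof.
  induction n as [|n IH]; intros j Hj.
  - apply (is_lim_ext_loc (fun _ => alpha ^ j)); [|apply is_lim_const].
    exists 0. intros x Hx.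
    destruct j as [|[|j]]; [| |lia]; simpl.
    + rewrite a_zero by lra. reflexivity.
    + rewrite a_one by lra. ring.
  - destruct (Nat.le_gt_cases j (S n)) as [Hle|Hgt]; [apply IH; lia|].
    replace j with (S (S n)) by lia.
    assert (HN : 0 < INR (S (S (S n)))) by (apply lt_0_INR; lia).
    assert (HI : 0 < INR (S n)) by (apply lt_0_INR; lia).
    apply (is_lim_ext_loc (X (S (S n)))).
    { exists 0. intros x Hx. apply X_pos; lra. }
    apply (conv_k (X (S (S n))) (fun x => Ssum (a (Rmax 0 x)) n / INR (S (S (S n))))
             (INR (S n) / INR (S (S (S n))))).
    + apply Rdiv_lt_0_compat; lra.
    + intros x Hx. apply X_cont; lra.
    + intros x Hx. rewrite (X_pos _ x) by lra. rewrite Rmax_right by lra.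
      rewrite <- ode_decomp by (apply a_zero; lra). apply X_deriv; lra.
    + apply (is_lim_ext_loc (fun x => Ssum (a x) n * / INR (S (S (S n))))).
      { exists 0. intros x Hx. rewrite Rmax_right by lra. reflexivity. }
      replace (INR (S n) / INR (S (S (S n))) * alpha ^ S (S n))
        with (INR (S n) * alpha ^ S (S n) * / INR (S (S (S n)))) by (field; lra).
      apply (is_lim_scal_r (fun x => Ssum (a x) n) (/ INR (S (S (S n)))) p_infty
               (INR (S n) * alpha ^ S (S n))).
      apply (Ssum_lim a n alpha). intros i Hi. apply IH. lia.
Qed.

Lemma finite_T (N : nat) (P : nat -> R -> Prop) :
  (forall j, exists T, forall t, T < t -> P j t) ->
  exists T, forall t, T < t -> forall j, (j <= N)%nat -> P j t.
Proof.
  intros H. induction N as [|N IH].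
  - destruct (H 0%nat) as [T HT]. exists T. intros t Ht j Hj.
    replace j with 0%nat by lia. auto.
  - destruct IH as [T1 H1]. destruct (H (S N)) as [T2 H2].
    exists (Rmax T1 T2). intros t Ht j Hj.
    assert (Hm1 := Rmax_l T1 T2). assert (Hm2 := Rmax_r T1 T2).
    destruct (Nat.le_gt_cases j N) as [Hle|Hgt].
    + apply H1; [lra|lia].
    + replace j with (S N) by lia. apply H2; lra.
Qed.

Lemma diff_bound t k : 0 <= t -> Rabs (a t k - alpha ^ k) <= delta ^ k.
Proof.
  intros Ht. assert (Hd := Hdel).
  destruct k as [|[|k]].
  - rewrite a_zero by lra. replace (1 - alpha ^ 0) with 0 by (simpl; ring). rewrite Rabs_R0. simpl. lra.
  - rewrite a_one by lra. replace (alpha - alpha ^ 1) with 0 by (simpl; ring). rewrite Rabs_R0. simpl. lra.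
  - destruct (bounds_all (S k) (S (S k)) ltac:(lia) t Ht) as [B1 B2].
    assert (P1 : 0 <= alpha ^ S (S k)) by (apply pow_le; lra).
    assert (P2 : alpha ^ S (S k) <= delta ^ S (S k)) by (apply pow_incr; lra).
    apply Rabs_le. lra.
Qed.

Lemma norm_lim :
  is_lim (fun t => normH (gamma / delta) (seq_sub (a t) (alpha_bar alpha))) p_infty 0.
Proof.
  apply is_lim_spec. intros eps. simpl.
  assert (Hep := cond_pos eps). assert (Hd := Hdel).
  destruct (pow_lt_1_zero (2 * gamma)) with (y := eps / 4) as [N HN].
  { rewrite Rabs_right; lra. }
  { lra. }
  specialize (HN N (Nat.le_refl N)). rewrite Rabs_right in HN by (apply Rle_ge, pow_le; lra).
  destruct (finite_T N (fun j t => Rabs (a t j - alpha ^ j) < eps / 4 * delta ^ j)) as [T HT].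
  { intros j. assert (L := lim_all j j ltac:(lia)).
    apply is_lim_spec in L.
    assert (Hp : 0 < eps / 4 * delta ^ j) by (apply Rmult_lt_0_compat; [lra | apply pow_lt; lra]).
    destruct (L (mkposreal _ Hp)) as [T HT]. exists T. exact HT. }
  exists (Rmax T 0). intros t Ht.
  assert (HtT := Rmax_l T 0). assert (Ht0 := Rmax_r T 0).
  set (u := fun k => (gamma / delta) ^ k * Rabs (seq_sub (a t) (alpha_bar alpha) k)).
  set (C := eps / 4 + (2 * gamma) ^ N).
  assert (Hu : forall k, 0 <= u k <= C * (1 / 2) ^ k).
  { intros k. unfold u, seq_sub, alpha_bar.
    assert (Hwk : 0 < (gamma / delta) ^ k) by (apply pow_lt, Hw; lra).
    assert (Hgk : (gamma / delta) ^ k * delta ^ k = gamma ^ k).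
    { rewrite <- Rpow_mult_distr. f_equal. field. lra. }
    assert (Hr := Rabs_pos (a t k - alpha ^ k)).
    split; [apply Rmult_le_pos; lra|].
    assert (Hh : 0 <= (1/2) ^ k) by (apply pow_le; lra).
    assert (Hgh : gamma ^ k <= (1/2) ^ k) by (apply pow_incr; lra).
    assert (HgN : 0 <= (2 * gamma) ^ N) by (apply pow_le; lra).
    destruct (Nat.le_gt_cases N k) as [HNk|HNk].
    + assert (Hb := diff_bound t k ltac:(lra)).
      assert (S1 : (gamma / delta) ^ k * Rabs (a t k - alpha ^ k) <= gamma ^ k).
      { rewrite <- Hgk. apply Rmult_le_compat_l; lra. }
      assert (S2 : gamma ^ k = (2 * gamma) ^ k * (1/2) ^ k).
      { rewrite <- Rpow_mult_distr. f_equal. field. }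
      assert (S3 : (2 * gamma) ^ k <= (2 * gamma) ^ N).
      { replace k with (N + (k - N))%nat by lia. rewrite pow_add.
        assert ((2 * gamma) ^ (k - N) <= 1).
        { rewrite <- (pow1 (k - N)). apply pow_incr. lra. }
        assert (0 <= (2 * gamma) ^ (k - N)) by (apply pow_le; lra).
        nra. }
      unfold C. nra.
    + assert (Hb := HT t ltac:(lra) k ltac:(lia)). simpl in Hb.
      assert (S1 : (gamma / delta) ^ k * Rabs (a t k - alpha ^ k) <= eps / 4 * gamma ^ k).
      { rewrite <- Hgk. assert ((gamma / delta) ^ k * Rabs (a t k - alpha ^ k) <= (gamma / delta) ^ k * (eps / 4 * delta ^ k)) by (apply Rmult_le_compat_l; lra).
        lra. }
      unfold C. nra. }
  assert (Hgeo : is_series (fun k => (1/2) ^ k) (/ (1 - 1/2))).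
  { apply is_series_geom. rewrite Rabs_right; lra. }
  assert (Hex : ex_series (fun k => C * (1/2) ^ k)).
  { apply (ex_series_scal_l C (fun k => (1/2) ^ k)). eexists; exact Hgeo. }
  assert (Hexu : ex_series u).
  { apply (ex_series_le u (fun k => C * (1/2) ^ k)); [|exact Hex].
    intros k. unfold norm; simpl. unfold abs; simpl. rewrite Rabs_pos_eq; apply Hu. }
  assert (Sup : Series u <= C * 2).
  { eapply Rle_trans; [apply Series_le; [exact Hu | exact Hex]|].
    rewrite Series_scal_l. change (pow (1/2)) with (fun k => (1/2) ^ k). rewrite (is_series_unique _ _ Hgeo). right. field. }
  assert (Slo : 0 <= Series u).
  { assert (Z := Series_scal_l 0 u). rewrite Rmult_0_l in Z. rewrite <- Z.
    apply Series_le; [|exact Hexu]. intros k. rewrite Rmult_0_l. split; [lra | apply Hu]. }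
  change (normH (gamma / delta) (seq_sub (a t) (alpha_bar alpha))) with (Series u).
  rewrite Rminus_0_r, Rabs_right by lra. unfold C in Sup. lra.
Qed.

Lemma main_sec :
  (forall t, 0 <= t -> X_set alpha delta (a t)) /\
  is_lim (fun t => normH (gamma / delta) (seq_sub (a t) (alpha_bar alpha))) p_infty 0.
Proof.
  split; [|exact norm_lim].
  intros t Ht. split; [apply a_zero; lra|]. split; [apply a_one; lra|].
  intros k Hk. apply (bounds_all k); [lia | lra].
Qed.

End Sol.

Theorem proposition13 (alpha delta gamma : R) (a0 : seqR) (a : R -> seqR) :
  0 < alpha -> alpha <= delta ->
  0 < gamma -> gamma < 1 / 3 ->
  X_set alpha delta a0 ->
  is_H_solution (gamma / delta) ode_field a0 a ->
  (forall t, 0 <= t -> X_set alpha delta (a t)) /\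
  is_lim (fun t => normH (gamma / delta) (seq_sub (a t) (alpha_bar alpha))) p_infty 0.
Proof.
  intros H1 H2 H3 H4 H5 H6.
  exact (main_sec alpha delta gamma a0 a H1 H2 H3 H4 H5 H6).
Qed.
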